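(* Let $G$ be a finite simple connected graph on $n$ vertices and $w:E(G)\to\mathbb{R}_{>0}$ a positive edge-weighting. For each edge $e$ define $C_w(e)$ as the maximum of $w(C)=\sum_{f\in E(C)}w(f)$ over all cycles $C\subseteq G$ containing $e$ if $e$ lies on a cycle, and $C_w(e)=2w(e)$ if $e$ is a bridge. Let $F=\{e\in E(G): C_w(e)<2w(e)\}$. Then the edge set $F$ contains no cycle; in particular $|F|\le n-1$.
   Context: A bridge is an edge lying on no cycle. *)

(* Defs.v *)
(* A finite simple graph is a symmetric irreflexive
   relation g on a finType T; edges are 2-element vertex sets {x,y}. *)
From mathcomp Require Import all_boot all_order all_algebra.
Set Implicit Arguments. Unset Strict Implicit. Unset Printing Implicit Defensive.
Import Order.TTheory GRing.Theory Num.Theory.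
Local Open Scope ring_scope.

Section Graphs.
Variable T : finType.
Variable g : rel T.

Definition is_edge (E : {set T}) : bool :=
  [exists x, exists y, g x y && (E == [set x; y])].

Definition is_gcycle (c : seq T) : bool := ucycleb g c && (2 < size c)%N.

Definition cycle_edges (c : seq T) : {set {set T}} :=
  [set [set x; next c x] | x in c].

Variable R : realFieldType.
Variable w : {set T} -> R.

Definition cycle_weight (c : seq T) : R := \sum_(E in cycle_edges c) w E.

Definition Cw (E : {set T}) (m : R) : Prop :=
  ((exists c, is_gcycle c /\ E \in cycle_edges c /\ cycle_weight c = m) /\
   (forall c, is_gcycle c -> E \in cycle_edges c -> cycle_weight c <= m))
  \/
  ((forall c, is_gcycle c -> E \notin cycle_edges c) /\ m = 2 * w E).

End Graphs.

(* Main.v *)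
Require Import Defs.
From mathcomp Require Import all_boot all_order all_algebra.
From mathcomp Require Import zify.
Import Order.TTheory GRing.Theory Num.Theory.
Local Open Scope ring_scope.

Lemma set2_eq (T : finType) (x y u v : T) :
  [set x; y] = [set u; v] -> (x = u /\ y = v) \/ (x = v /\ y = u).
Proof.
move=> H.
have /set2P hx : x \in [set u; v] by rewrite -H set21.
have /set2P hy : y \in [set u; v] by rewrite -H set22.
have /set2P hu : u \in [set x; y] by rewrite H set21.
have /set2P hv : v \in [set x; y] by rewrite H set22.
by case: hx => ?; case: hy => ?; case: hu => ?; case: hv => ?; subst;
  first [by left | by right].
Qed.

Definition rF {T : finType} (F : {set {set T}}) : rel T :=
  fun x y => [set x; y] \in F.

Lemma rF_g (T : finType) (g : rel T) (F : {set {set T}}) :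
  symmetric g -> irreflexive g ->
  (forall E, E \in F -> is_edge g E) -> subrel (rF F) g.
Proof.
move=> sg ig hF x y /hF /existsP [u /existsP [v /andP [guv /eqP]]].
by case/set2_eq => [[-> ->]|[-> ->]] //; rewrite sg.
Qed.

Lemma rF_sym (T : finType) (F : {set {set T}}) : symmetric (rF F).
Proof. by move=> x y; rewrite /rF setUC. Qed.

Lemma cycle_of_conn (T : finType) (g : rel T) (F : {set {set T}}) a b :
  symmetric g -> irreflexive g ->
  (forall E, E \in F -> is_edge g E) -> [set a; b] \in F -> a != b ->
  connect (rF (F :\ [set a; b])) a b ->
  exists c, is_gcycle g c /\ cycle_edges c \subset F.
Proof.
move=> sg ig hF eF ab /connectP [p pth lst].
case: (shortenP pth) lst => p' pth' up' _ lst'.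
have sub0 : subrel (rF (F :\ [set a; b])) (rF F).
  by move=> x y; rewrite /rF inE => /andP [].
have cyF : cycle (rF F) (a :: p').
  rewrite /= rcons_path (sub_path sub0 pth') -lst' /rF setUC //.
exists (a :: p'); split.
  rewrite /is_gcycle /ucycleb (sub_cycle (@rF_g T g F sg ig hF) cyF) up' /=.
  case: p' pth' up' lst' {cyF} => [|y [|z q]] //=.
    by move=> _ _ ab'; rewrite ab' eqxx in ab.
  move=> /andP [h _] _ yb; subst y.
  by move: h; rewrite /rF !inE eqxx.
apply/subsetP => E /imsetP [x xc ->].
exact: (next_cycle cyF xc).
Qed.
Definition cls {T : finType} (F : {set {set T}}) (x : T) : {set T} :=
  [set y | connect (rF F) x y].
Definition clss {T : finType} (F : {set {set T}}) : {set {set T}} :=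
  [set cls F x | x : T].

Lemma forest_bound (T : finType) (g : rel T) (F : {set {set T}}) :
  symmetric g -> irreflexive g ->
  (forall E, E \in F -> is_edge g E) ->
  (forall c, is_gcycle g c -> ~ (cycle_edges c \subset F)) ->
  (#|F| + #|clss F| <= #|T|)%N.
Proof.
move=> sg ig.
have [n] := ubnP #|F|; elim: n F => // n IH F ltF hF acF.
case: (set_0Vmem F) => [->|[e eF]].
  by rewrite cards0 add0n; apply: leq_trans (leq_imset_card _ _) (max_card _).
have := hF e eF => /existsP [a /existsP [b /andP [gab /eqP ee]]].
subst e.
have ab : a != b by apply/eqP => eab; subst b; rewrite ig in gab.
set F0 := F :\ [set a; b].
have cF : #|F| = (#|F0| + 1)%N by rewrite (cardsD1 [set a; b] F) eF addnC.
have hF0 : forall E, E \in F0 -> is_edge g E.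
  by move=> E; rewrite inE => /andP [_ /hF].
have acF0 : forall c, is_gcycle g c -> ~ (cycle_edges c \subset F0).
  move=> c cc sc; apply: (acF c cc); apply: subset_trans sc _.
  exact: subsetDl.
have IH0 := IH F0 ltac:(lia) hF0 acF0.
have nab : ~~ connect (rF F0) a b.
  apply/negP => cab.
  have [c [cc sc]] := @cycle_of_conn T g F a b sg ig hF eF ab cab.
  exact: (acF c cc sc).
have sub0 : subrel (rF F0) (rF F).
  by move=> x y; rewrite /rF inE => /andP [].
pose f (C : {set T}) := \bigcup_(x in C) cls F x.
have fE : forall x, f (cls F0 x) = cls F x.
  move=> x; apply/setP => y; apply/bigcupP/idP.
    move=> [z]; rewrite !inE => cxz cyz.
    apply: connect_trans cyz.
    by apply: (connect_sub _ cxz) => u v /sub0 h; apply: connect1.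
  by move=> hy; exists x => //; rewrite inE connect0.
have symF := sym_connect_sym (@rF_sym T F).
have clab : cls F a = cls F b.
  apply/setP => z; rewrite !inE; apply: same_connect => //.
  by apply: connect1; rewrite /rF.
have nab' : cls F0 b != cls F0 a.
  apply/eqP => h; move: nab.
  have : b \in cls F0 b by rewrite inE connect0.
  by rewrite h inE => ->.
have sub1 : clss F \subset f @: (clss F0 :\ cls F0 a).
  apply/subsetP => C /imsetP [x _ ->].
  case: (eqVneq (cls F0 x) (cls F0 a)) => hx.
    apply/imsetP; exists (cls F0 b).
      by rewrite !inE nab' imset_f.
    by rewrite fE -clab -fE hx fE.
  apply/imsetP; exists (cls F0 x); last by rewrite fE.
  by rewrite !inE hx imset_f.
have := subset_leq_card sub1.
have := leq_imset_card f (clss F0 :\ cls F0 a).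
have : cls F0 a \in clss F0 by rewrite imset_f.
move=> ca; move: IH0; rewrite (cardsD1 (cls F0 a) (clss F0)) ca.
move=> h0 h1 h2; move: cF h0 h1 h2 => /=; rewrite add1n => e1 e2 e3 e4; rewrite e1 addn1 addSn -addnS; apply: leq_trans e2; rewrite leq_add2l ltnS; exact: leq_trans e4 e3.
Qed.
From mathcomp Require Import lra.

Lemma no_cycle (T : finType) (g : rel T) (R : realFieldType)
  (w : {set T} -> R) (F : {set {set T}}) :
  (forall E, is_edge g E -> 0 < w E) ->
  (forall E, E \in F <->
     (is_edge g E /\ exists m, Cw g w E m /\ m < 2 * w E)) ->
  (forall c : seq T, is_gcycle g c -> ~ (cycle_edges c \subset F)).
Proof.
move=> wpos hF c cc sub.
have cc' := cc; move: cc' => /andP [/andP [cy uc] sz].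
have pos : forall E, E \in cycle_edges c -> 0 < w E.
  move=> E /imsetP [x xc ->]; apply: wpos.
  apply/existsP; exists x; apply/existsP; exists (next c x).
  by rewrite (next_cycle cy xc) eqxx.
have key : forall E, E \in cycle_edges c -> cycle_weight w c < 2 * w E.
  move=> E EC; have [_ [m [[[_ hm]|[hn _]] lt]]] := (hF E).1 (subsetP sub E EC).
    exact: le_lt_trans (hm c cc EC) lt.
  by move: (hn c cc); rewrite EC.
case: c cc cy uc sz sub pos key => [|x0 s] // cc cy uc sz sub pos key.
set c := x0 :: s.
set e0 := [set x0; next c x0].
have e0c : e0 \in cycle_edges c by apply: imset_f; rewrite inE eqxx.
case: (pickP [pred e1 in cycle_edges c | e1 != e0]) => [e1 /andP [e1c ne] | none].
  have k0 := key e0 e0c; have k1 := key e1 e1c.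
  have hs : w e0 + w e1 <= cycle_weight w c.
    rewrite /cycle_weight (bigD1 e0) //= (bigD1 e1) /=; last by rewrite e1c ne.
    rewrite addrA lerDl; apply: sumr_ge0 => E /andP [/andP [EC _] _].
    exact: ltW (pos E EC).
  lra.
have allc : {subset c <= e0}.
  move=> x xc.
  have ex : [set x; next c x] \in cycle_edges c by apply: imset_f.
  have := none [set x; next c x]; rewrite /= ex /= => /negbFE /eqP <-.
  by rewrite set21.
have : (#|c| <= #|e0|)%N.
  by apply: subset_leq_card; apply/subsetP.
rewrite (card_uniqP uc) cards2.
by case: (x0 != next c x0) => /= h; move: (leq_trans sz h).
Qed.

Theorem corollary4p3 (T : finType) (g : rel T) (R : realFieldType)
  (w : {set T} -> R) (F : {set {set T}}) :
  symmetric g -> irreflexive g ->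
  (forall x y : T, connect g x y) ->
  (forall E, is_edge g E -> 0 < w E) ->
  (forall E, E \in F <->
     (is_edge g E /\ exists m, Cw g w E m /\ m < 2 * w E)) ->
  (forall c : seq T, is_gcycle g c -> ~ (cycle_edges c \subset F)) /\
  (#|F| <= #|T| - 1)%N.
Proof.
move=> sg ig _ wpos hF.
have acF := @no_cycle T g R w F wpos hF.
split => //.
have hF' : forall E, E \in F -> is_edge g E by move=> E /hF [].
have fb := @forest_bound T g F sg ig hF' acF.
case: (set_0Vmem F) => [->|[E EF]]; first by rewrite cards0.
have := hF' E EF => /existsP [x _].
have : (0 < #|clss F|)%N by apply/card_gt0P; exists (cls F x); apply: imset_f.
move: fb; case: #|clss F| => // k.
rewrite addnS => h _.
move: h; lia.
Qed.
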